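(* Let $m,n,d,e$ be positive integers with $m=2n$ and $e=\gcd(n,d)=\gcd(m,d)$, and let $s\ge u\ge1$ be integers. If $(x_1,x_2,\dots,x_{2u})\in V_{s,u}$, then $x_1,x_2,x_4,x_6,\dots,x_{2u}$ are linearly dependent over $\mathbb{F}_{2^e}$.
   Context: For integers $s\ge0$ and $u\ge1$, $V_{s,u}$ denotes the set of solutions $(x_1,\dots,x_{2u})\in\mathbb{F}_{2^m}^{2u}$ of the system \[\sum_{i=1}^u\big(x_{2i-1}x_{2i}^{2^{(\frac{n}{e}-j)d}}+x_{2i-1}^{2^{(\frac{n}{e}-j)d}}x_{2i}\big)=0,\qquad j=0,1,\dots,s.\] *)

(* Defs.v *)
From HB Require Import structures.
From mathcomp Require Import all_boot all_order all_algebra all_field.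
Set Implicit Arguments. Unset Strict Implicit. Unset Printing Implicit Defensive.
Import Order.TTheory GRing.Theory Num.Theory.
Local Open Scope ring_scope.

(* Frobenius power x |-> x^(2^k) for an integer k, in a field with 2^m
   elements: since x^(2^m) = x, the exponent k is read modulo m
   (this makes sense of negative k). *)
Definition frobz (F : finFieldType) (m : nat) (k : int) (x : F) : F :=
  x ^+ (2 ^ `|(k %% (m%:Z))%Z|%N).

Definition Vexp (n d e j : nat) : int :=
  ((n %/ e)%:Z - j%:Z) * d%:Z.

(* (x_1, ..., x_{2u}) in V_{s,u}; the tuple is encoded by x : nat -> F
   using indices 1 .. 2u (other values are irrelevant). *)
Definition in_V (F : finFieldType) (m n d e s u : nat) (x : nat -> F) : Prop :=
  forall j : nat, (j <= s)%N ->
    \sum_(1 <= i < u.+1)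
      (x (2 * i - 1)%N * frobz m (Vexp n d e j) (x (2 * i)%N)
       + frobz m (Vexp n d e j) (x (2 * i - 1)%N) * x (2 * i)%N) = 0.

(* The subfield F_{2^e} of F (for e | m): the elements fixed by x |-> x^(2^e). *)
Definition in_subF2e (F : finFieldType) (e : nat) (c : F) : bool :=
  c ^+ (2 ^ e) == c.

Definition lin_dep_over (F : finFieldType) (e : nat) (ys : seq F) : Prop :=
  exists c : seq F,
    [/\ size c = size ys, all (in_subF2e e) c, has (fun a => a != 0) c &
        \sum_(i < size ys) c`_i * ys`_i = 0].

(* Main.v *)
Require Import Defs.
From HB Require Import structures.
From mathcomp Require Import all_boot all_order all_algebra all_field.
From mathcomp Require Import zify ring.
From Stdlib Require Import Classical.
Import GRing.Theory.
Local Open Scope ring_scope.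
Set Implicit Arguments. Unset Strict Implicit.

Section Phi.
Variable F : fieldType.
Hypothesis ch2 : (2 \in [pchar F])%N.

Definition phi (a : nat) (y : F) := y ^+ (2 ^ a).

Lemma phiD a x y : phi a (x + y) = phi a x + phi a y.
Proof.
rewrite /phi; elim: a => [|a IH]; first by rewrite !expr1.
by rewrite expnSr !exprM IH -!(pFrobenius_autE ch2) rmorphD.
Qed.
Lemma phiM a x y : phi a (x * y) = phi a x * phi a y.
Proof. by rewrite /phi exprMn. Qed.
Lemma phi0 a : phi a 0 = 0.
Proof. by rewrite /phi expr0n expn_eq0. Qed.
Lemma phi1 a : phi a 1 = 1.
Proof. by rewrite /phi expr1n. Qed.
Lemma phiN a x : phi a (- x) = - phi a x.
Proof. by rewrite !oppr_pchar2. Qed.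
Lemma phiB a x y : phi a (x - y) = phi a x - phi a y.
Proof. by rewrite phiD phiN. Qed.
Lemma phiV a x : phi a (x^-1) = (phi a x)^-1.
Proof. by rewrite /phi exprVn. Qed.
Lemma phi_comp a b x : phi a (phi b x) = phi (b + a) x.
Proof. by rewrite /phi -exprM expnD. Qed.
Lemma phi_eq0 a x : (phi a x == 0) = (x == 0).
Proof. by rewrite /phi expf_eq0 expn_gt0. Qed.
Lemma phi_sum a I r (P : pred I) (f : I -> F) :
  phi a (\sum_(i <- r | P i) f i) = \sum_(i <- r | P i) phi a (f i).
Proof. exact: (big_morph _ (phiD a) (phi0 a)). Qed.

Lemma phi_fix_iter d t p : phi d t = t -> phi (d * p) t = t.
Proof.
move=> h; elim: p => [|p IH]; first by rewrite muln0 /phi expr1.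
by rewrite mulnS -phi_comp h IH.
Qed.

Variables (d e : nat).
Hypothesis hfix : forall t, phi d t = t -> phi e t = t.

Definition indep r (g : nat -> F) := forall t : nat -> F,
  (forall i, (i < r)%N -> phi e (t i) = t i) ->
  \sum_(i < r) t i * g i = 0 -> forall i, (i < r)%N -> t i = 0.

Lemma indep_tail r g : indep r.+1 g -> indep r (fun l => g l.+1).
Proof.
move=> H t Ht Hs i Hi.
have := H (fun l => if l is l'.+1 then t l' else 0) _ _ i.+1 Hi; apply.
  by case=> [|l] Hl //=; [rewrite phi0 | apply: Ht].
by rewrite big_ord_recl /= mul0r add0r.
Qed.

Lemma moore r : forall (g c : nat -> F) j0, indep r g ->
  (forall j, (j < r)%N -> \sum_(l < r) c l * phi (d * (j0 + j)) (g l) = 0) ->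
  forall l, (l < r)%N -> c l = 0.
Proof.
elim: r => [|r IH] g c j0 Hind Heq l Hl //.
have Hind' := indep_tail Hind.
have [c0|c0] := eqVneq (c 0%N) 0.
  case: l Hl => [|l] Hl //.
  apply: (IH (fun l => g l.+1) (fun l => c l.+1) j0 Hind') => // j Hj.
  by have := Heq j (ltnW Hj); rewrite big_ord_recl /= c0 mul0r add0r.
exfalso; clear l Hl.
have Hc2 : forall l, (l < r)%N ->
   phi d (c l.+1) * c 0%N - c l.+1 * phi d (c 0%N) = 0.
  apply: (IH (fun l => g l.+1) _ j0.+1 Hind') => j Hj.
  have E1 := Heq j (ltnW Hj); have E2 := Heq j.+1 Hj.
  have := congr1 (phi d) E1; rewrite phi0 phi_sum => E1'.
  have : c 0%N * (\sum_(l < r.+1) phi d (c l * phi (d * (j0 + j)) (g l)))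
         - phi d (c 0%N) * (\sum_(l < r.+1) c l * phi (d * (j0 + j.+1)) (g l)) = 0.
    by rewrite E1' E2 !mulr0 subrr.
  have sh : forall y, phi d (phi (d * (j0 + j)) y) = phi (d * (j0 + j.+1)) y.
    by move=> y; rewrite phi_comp addnS mulnS addnC.
  rewrite !big_distrr -sumrB big_ord_recl /= phiM sh.
  rewrite [X in X + _](_ : _ = 0); last by rewrite mulrCA mulrA subrr.
  rewrite add0r => H; apply: etrans H; apply: eq_bigr => i _; rewrite /bump leq0n add1n.
  rewrite phiM sh /= -addSnnS.
  by rewrite mulrBl !mulrA [c 0%N * _]mulrC [phi d (c 0%N) * _]mulrC.
pose t l := c l / c 0%N.
have pc0 : phi d (c 0%N) != 0 by rewrite phi_eq0.
have Ht : forall k, (k < r.+1)%N -> phi d (t k) = t k.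
  case=> [|k] Hk; first by rewrite /t divff // phi1.
  have := Hc2 k Hk; move/eqP; rewrite subr_eq0 => /eqP H.
  rewrite /t phiM phiV -[phi d (c k.+1)](mulfK c0) H mulrAC mulfK //.
have := Heq 0%N (ltn0Sn _); rewrite addn0.
have -> : \sum_(l < r.+1) c l * phi (d * j0) (g l)
   = c 0%N * phi (d * j0) (\sum_(l < r.+1) t l * g l).
  rewrite phi_sum big_distrr; apply: eq_bigr => i _.
  by rewrite /= phiM (@phi_fix_iter d (t i) j0 (Ht i (ltn_ord i))) /t mulrA [c 0%N * _]mulrC divfK.
move/eqP; rewrite mulf_eq0 (negbTE c0) phi_eq0 /= => /eqP Hs.
have Hfq : forall i, (i < r.+1)%N -> phi e (t i) = t i.
  by move=> i Hi; apply/hfix/Ht.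
have := Hind t Hfq Hs 0%N (ltn0Sn _).
by rewrite /t divff // => /eqP; rewrite oner_eq0.
Qed.

Hypothesis hed : (e %| d)%N.

Lemma fixe_fixd t : phi e t = t -> phi d t = t.
Proof. by move=> h; rewrite -(divnK hed) mulnC phi_fix_iter. Qed.

Lemma key r g : indep r g -> forall M (v c : nat -> F) (T : nat -> nat -> F) j0,
  (forall l h, phi e (T l h) = T l h) ->
  (forall l, (l < M)%N -> v l = \sum_(h < r) T l h * g h) ->
  (forall j, (j < r)%N -> \sum_(l < M) c l * phi (d * (j0 + j)) (v l) = 0) ->
  forall h, (h < r)%N -> \sum_(l < M) c l * T l h = 0.
Proof.
move=> Hind M v c T j0 HT Hv Heq.
move=> h Hh.
apply: (@moore r g (fun h => \sum_(l < M) c l * T l h) j0 Hind _ h Hh) => j Hj.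
apply: etrans (Heq j Hj); apply: esym.
under [LHS]eq_bigr => l _ do rewrite (Hv l (ltn_ord l)) phi_sum big_distrr.
rewrite exchange_big /=; apply: eq_bigr => h' _; rewrite big_distrl /=.
apply: eq_bigr => l _.
by rewrite phiM (phi_fix_iter _ (fixe_fixd (HT l h'))) mulrA.
Qed.

Lemma not_indep r g : ~ indep r g -> exists t : nat -> F,
  [/\ (forall i, (i < r)%N -> phi e (t i) = t i),
      \sum_(i < r) t i * g i = 0 & exists2 i, (i < r)%N & t i != 0].
Proof.
move=> H; apply: NNPP => H2; apply: H => t Ht Hs i Hi.
apply: NNPP => Hti; apply: H2; exists t; split => //; exists i => //.
by apply/eqP.
Qed.

Lemma extend r0 (g0 : nat -> F) : indep r0 g0 -> forall L (w : nat -> F),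
  exists r (g : nat -> F) (T : nat -> nat -> F),
  [/\ (r0 <= r <= r0 + L)%N, (forall h, (h < r0)%N -> g h = g0 h), indep r g,
      (forall i, (i < L)%N -> w i = \sum_(h < r) T i h * g h) &
      (forall i h, phi e (T i h) = T i h)].
Proof.
move=> H0; elim=> [|L IH] w.
  exists r0, g0, (fun _ _ => 0); split => //; first by rewrite addn0 leqnn.
  by move=> *; rewrite phi0.
have [r [g [T [Hr Hg Hind Hw HT]]]] := IH w.
pose g' h := if (h < r)%N then g h else w L.
have g'r : g' r = w L by rewrite /g' ltnn.
have sum_g' : forall t : nat -> F, \sum_(h < r.+1) t h * g' h
     = \sum_(h < r) t h * g h + t r * w L.
  move=> t; rewrite big_ord_recr /= g'r; congr (_ + _).
  by apply: eq_bigr => h _; rewrite /g' ltn_ord.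
have [Hind'|Hnind] := classic (indep r.+1 g').
  exists r.+1, g', (fun i h => if i == L then (h == r)%:R
                               else if (h < r)%N then T i h else 0); split.
  - by case/andP: Hr => H1 H2; rewrite addnS ltnS H2 leqW.
  - move=> h Hh; rewrite /g' ifT ?Hg //.
    by case/andP: Hr => H1 _; apply: leq_trans Hh H1.
  - exact: Hind'.
  - move=> i Hi.
    rewrite (sum_g' (fun h => if i == L then (h == r)%:R else if (h < r)%N then T i h else 0)) /=.
    case: (eqVneq i L) => [->|HiL].
      rewrite eqxx mulr1n big1 ?add0r ?mul1r // => h _.
      by rewrite (ltn_eqF (ltn_ord h)) mul0r.
    rewrite ltnn mul0r addr0 Hw; last by rewrite ltnS leq_eqVlt (negbTE HiL) in Hi.
    by apply: eq_bigr => h _; rewrite ltn_ord.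
  - move=> i h; case: ifP => _; first by case: (h == r); rewrite ?phi1 ?phi0.
    by case: ifP => _; rewrite ?HT ?phi0.
have [t [Ht Hs [i Hi Hti]]] := not_indep Hnind.
have [tr0|tr0] := eqVneq (t r) 0.
  exfalso; move: Hs; rewrite sum_g' tr0 mul0r addr0 => Hs.
  have Hir : (i < r)%N.
    rewrite ltnS leq_eqVlt in Hi; case/orP: Hi => // /eqP Hi.
    by move: Hti; rewrite Hi tr0 eqxx.
  by move: Hti; rewrite (Hind t (fun k Hk => Ht k (ltnW Hk)) Hs i Hir) eqxx.
exists r, g, (fun i h => if i == L then (if (h < r)%N then - t h / t r else 0) else T i h); split => //.
- by case/andP: Hr => H1 H2; rewrite addnS H1 (leq_trans H2) // leqnSn.
- move=> k Hk; case: (eqVneq k L) => [->|HkL].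
    move: Hs; rewrite sum_g' => /eqP; rewrite addrC addr_eq0 => /eqP Hs.
    apply: (mulfI tr0); rewrite Hs big_distrr -sumrN; apply: eq_bigr => h _.
    by rewrite /= ltn_ord mulrA mulrCA divff // mulr1 mulNr.
  by apply: Hw; rewrite ltnS leq_eqVlt (negbTE HkL) in Hk.
- move=> k h; case: ifP => _; last exact: HT.
  case: ifP => Hh; last by rewrite phi0.
  by rewrite phiM phiN phiV Ht ?Ht // ltnW.
Qed.
End Phi.
Unset Implicit Arguments.
Lemma arith1 (n d e s j k d' : nat) : (0 < k)%N -> n = (k * e)%N -> d = (d' * e)%N -> (j <= s)%N ->
  Posz (d * (k + 2 * k * s - j)) = ((k%:Z - j%:Z) * d%:Z + (s * d')%:Z * (2 * n)%:Z)%R.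
Proof. move=> hk hn hd hj; subst n d; nia. Qed.

Lemma arith2 (n d e s j k d' : nat) : (0 < k)%N -> n = (k * e)%N -> d = (d' * e)%N -> (j <= s)%N ->
  (d * (k + 2 * k * s - j) + d * (k + 2 * k * s + j) = (d' * (1 + 2 * s)) * (2 * n))%N.
Proof. move=> hk hn hd hj; subst n d; nia. Qed.

Section Main.
Variables (F : finFieldType) (m n d e s u : nat) (x : nat -> F).
Hypotheses (hm : (0 < m)%N) (hn : (0 < n)%N) (hd : (0 < d)%N) (he : (0 < e)%N)
  (hcard : #|F| = (2 ^ m)%N) (hmn : m = (2 * n)%N)
  (hen : e = gcdn n d) (hem : e = gcdn m d) (hu : (1 <= u)%N) (hus : (u <= s)%N)
  (hV : in_V m n d e s u x).

Let ch2 : (2 \in [pchar F])%N.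
Proof. exact: card_finPcharP hcard _. Qed.

Let phim (y : F) : phi m y = y.
Proof. by rewrite /phi -hcard expf_card. Qed.

Let phi_mod a (y : F) : phi a y = phi (a %% m) y.
Proof.
rewrite {1}(divn_eq a m) -phi_comp (mulnC (a %/ m)%N).
by rewrite (phi_fix_iter _ (phim y)).
Qed.

Let hfix (t : F) : phi d t = t -> phi e t = t.
Proof.
move=> h; case: (egcdnP d hm) => km kn Heq _.
have : phi (km * m) t = t by rewrite mulnC phi_fix_iter.
by rewrite Heq -hem -phi_comp mulnC phi_fix_iter.
Qed.

Let hed : (e %| d)%N.
Proof. by rewrite hem dvdn_gcdr. Qed.

Definition A i := x (2 * i + 1)%N.
Definition B i := x (2 * i + 2)%N.
Definition E p := \sum_(i < u) (A i * phi p (B i) + phi p (A i) * B i) = 0.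

Let k := (n %/ e)%N.
Let hk : (0 < k)%N.
Proof. by rewrite divn_gt0 // hen dvdn_leq // dvdn_gcdl. Qed.
Let hnk : n = (k * e)%N.
Proof. by rewrite divnK // hen dvdn_gcdl. Qed.
Let d' := (d %/ e)%N.
Let hdd : d = (d' * e)%N.
Proof. by rewrite divnK. Qed.

Let Et j : (j <= s)%N -> E (d * (k + 2 * k * s - j)).
Proof.
move=> hj; have := hV j hj; rewrite /E big_add1 big_mkord => H.
rewrite -[RHS]H; apply: eq_bigr => i _.
have hv : `|(Vexp n d e j %% m)%Z|%N = ((d * (k + 2 * k * s - j)) %% m)%N.
  have ht : Vexp n d e j = (- (s * d')%N%:Z) * m%:Z + (d * (k + 2 * k * s - j))%N%:Z.
    rewrite (@arith1 n d e s j k d' hk hnk hdd hj) -hmn /Vexp -/k; ring.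
  by rewrite ht modzMDl modz_nat.
have -> : (2 * i.+1 - 1 = 2 * i + 1)%N by lia.
have -> : (2 * i.+1 = 2 * i + 2)%N by lia.
by rewrite /frobz hv -!/(phi _ _) -!phi_mod.
Qed.

Let Erefl p p' : E p -> ((p + p') %% m = 0)%N -> E p'.
Proof.
move=> H H0; have := congr1 (phi p') H; rewrite phi0 (phi_sum ch2) => H1.
rewrite /E; apply: etrans _ H1; apply: eq_bigr => i _.
rewrite (phiD ch2) !phiM !phi_comp !(phi_mod (p + p')) !H0.
by rewrite /phi !expr1 addrC mulrC.
Qed.

Let K0 := (k + 2 * k * s - s)%N.

Let Eall J : (J < (2 * s).+1)%N -> E (d * (K0 + J)).
Proof.
move=> hJ; case: (leqP J s) => hJs.
  have := Et (s - J) (leq_subr J s).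
  by have -> : (k + 2 * k * s - (s - J) = K0 + J)%N by rewrite /K0; nia.
have hj : (J - s <= s)%N by lia.
apply: (Erefl _ _ (Et (J - s) hj)).
have -> : (K0 + J = k + 2 * k * s + (J - s))%N by rewrite /K0; nia.
by rewrite (@arith2 n d e s (J - s) k d' hk hnk hdd hj) hmn modnMl.
Qed.

Lemma sum_delta r a (g : nat -> F) : (a < r)%N ->
  \sum_(h < r) (h == a :> nat)%:R * g h = g a.
Proof.
move=> Ha; rewrite (bigD1 (Ordinal Ha)) //= eqxx mul1r big1 ?addr0 // => h Hh.
have -> : (h == a :> nat) = false.
  by apply/negbTE; apply: contra Hh => /eqP Hh; apply/eqP; apply: val_inj.
by rewrite mul0r.
Qed.

Lemma main_res : lin_dep_over e (x 1%N :: [seq x (2 * i)%N | i <- iota 1 u]).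
Proof.
apply: NNPP => Hnd.
pose y h := if h is h'.+1 then B h' else A 0.
have Hy : indep e u.+1 y.
  move=> t Ht Hs i Hi; apply: NNPP => Hti; apply: Hnd.
  exists (mkseq t u.+1); split.
  - by rewrite size_mkseq /= size_map size_iota.
  - apply/allP => c /mapP [i' Hi' ->]; rewrite /in_subF2e; apply/eqP; apply: Ht.
    by rewrite mem_iota in Hi'.
  - apply/hasP; exists (t i); last by apply/eqP.
    by rewrite -[t i](nth_mkseq 0 t Hi) mem_nth ?size_mkseq.
  - rewrite /= size_map size_iota; apply: etrans _ Hs; apply: eq_bigr => j _.
    rewrite nth_mkseq //; congr (_ * _).
    case: j => [[|j] Hj] //=.
    rewrite (nth_map 0%N) ?size_iota // nth_iota //.
    by rewrite /y /B; congr x; lia.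
have [r [g [T [Hr Hg Hind Hw HT]]]] := extend ch2 Hy u.-1 (fun i => A i.+1).
case/andP: Hr => Hr1 Hr2.
have Hr2s : (r <= 2 * s)%N by lia.
pose v l := if (l < u)%N then B l else A (l - u).
pose c l := if (l < u)%N then A l else B (l - u).
pose T' l h := if (l < u)%N then (h == l.+1 :> nat)%:R
               else if l == u then (h == 0 :> nat)%:R else T (l - u).-1 h.
have HT' : forall l h, phi e (T' l h) = T' l h.
  move=> l h; rewrite /T'; case: ifP => _; first by case: (h == l.+1); rewrite ?phi1 ?phi0.
  by case: ifP => _; [case: (h == 0%N); rewrite ?phi1 ?phi0 | apply: HT].
have Hv : forall l, (l < u + u)%N -> v l = \sum_(h < r) T' l h * g h.
  move=> l Hl; rewrite /v /T'; case: ifP => Hlu.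
    by rewrite sum_delta ?Hg //; lia.
  case: (eqVneq l u) => [El|Hlu'].
    by rewrite El subnn sum_delta ?Hg //; lia.
  idtac.
  have -> : (l - u = (l - u).-1.+1)%N by move/negbT: Hlu; move: Hlu'; lia.
  by apply: Hw; lia.
have Heq : forall j, (j < r)%N ->
    \sum_(l < u + u) c l * phi (d * (K0 + j)) (v l) = 0.
  move=> j Hj; have := Eall j (leq_trans Hj (leq_trans Hr2s (leqnSn _))).
  rewrite /E big_split /= => H; apply: etrans _ H.
  rewrite big_split_ord /=; congr (_ + _); apply: eq_bigr => i _.
    by rewrite /c /v /= ltn_ord.
  by rewrite /c /v /= ltnNge leq_addr /= addKn mulrC.
have H0 := key ch2 hfix hed Hind HT' Hv Heq (leq_trans (ltn0Sn u) Hr1).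
pose t h := if h is h'.+1 then T' (u + h')%N 0%N else 0.
have Ht : forall i, (i < u.+1)%N -> phi e (t i) = t i.
  by case=> [|i] _ //=; rewrite phi0.
have Hs : \sum_(i < u.+1) t i * y i = 0.
  move: H0; rewrite big_split_ord /= big1 ?add0r => [H0|i _]; last first.
    by rewrite /T' ltn_ord mulr0.
  rewrite big_ord_recl /= mul0r add0r; apply: etrans _ H0; apply: eq_bigr => i _.
  rewrite /c ltnNge leq_addr /= addKn mulrC.
  by rewrite add0n.
have := Hy t Ht Hs 1%N hu.
by rewrite /t /T' addn0 ltnn eqxx => /eqP; rewrite oner_eq0.
Qed.
End Main.

Theorem theorem5p2 (F : finFieldType) (m n d e s u : nat) (x : nat -> F) :
  (0 < m)%N -> (0 < n)%N -> (0 < d)%N -> (0 < e)%N ->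
  #|F| = (2 ^ m)%N -> m = (2 * n)%N ->
  e = gcdn n d -> e = gcdn m d ->
  (1 <= u)%N -> (u <= s)%N ->
  in_V m n d e s u x ->
  lin_dep_over e (x 1%N :: [seq x (2 * i)%N | i <- iota 1 u]).
Proof.
move=> hm hn hd he hcard hmn hen hem hu hus hV.
exact: (main_res F m n d e s u x hm hn hd he hcard hmn hen hem hu hus hV).
Qed.
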